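(* Under assumption (A1) with all $r_k>0$, in the steady state of Algorithm JPS-PF (i.e., when $\mathbf T(n-1)=\mathbf T^*$ with $T_k^*=\kappa r_k$ for all $k$), the probability that any given user $k\in\{1,\dots,K\}$ is selected as the destination in a slot equals $1/K$.
   Context: Model: one controller, $K$ users, time slotted, one user served per slot, saturated traffic. Assumption (A1): $X_1,\dots,X_K$ are i.i.d. nonnegative random variables with unit mean; $r_1,\dots,r_K\ge 0$ are constants; $R_k=r_kX_k$; the rates $\{R_k(n)\}$ are independent over users and slots, with $R_k(n)$ distributed as $R_k$. Probing one user's rate in slot $n$ uses a fraction $\beta\in(0,1]$ of the slot; if $J(n)$ users are probed and user $k$ is scheduled it receives $B_k(n)=(1-J(n)\beta)R_k(n)$, others receive $0$; $T_k(n)=\frac{n-1}{n}T_k(n-1)+\frac1nB_k(n)$; $J_{\max}=\min(K,\lfloor1/\beta\rfloor)$. Algorithm JPS-PF: initialize $T_k(0)=1$. In slot $n$, order users by decreasing $r_k/T_k(n-1)$ as $k_1,\dots,k_K$ and probe in this order; after $j\ge1$ probes let $w_j=\max_{i\le j}R_{k_i}(n)/T_{k_i}(n-1)$; stop at the first $j\ge1$ with $j=J_{\max}$ or $(1-j\beta)w_j\ge(1-(j+1)\beta)\mathbb{E}[\max(w_j,R_{k_{j+1}}/T_{k_{j+1}}(n-1))\mid w_j]$, then transmit to the probed user attaining $w_j$. $\mathbf T^*$ denotes the almost-sure limit of $\mathbf T(n)$ under this algorithm and $\kappa$ the common ratio $T_k^*/r_k$.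
   Formalization: The probing order is drawn uniformly from the orderings by decreasing $r_k/T_k$, independently of $X_1,\dots,X_K$, and among probed users attaining $w_j$ the first probed one is scheduled. Apart from conventions, each condition added here is assumed in the paper as well or is needed for the statement above to hold. *)

(* Defs.v *)
From HB Require Import structures.
From mathcomp Require Import all_boot all_order all_algebra all_fingroup.
From mathcomp Require Import all_classical all_reals all_analysis.
Set Implicit Arguments. Unset Strict Implicit. Unset Printing Implicit Defensive.
Import Order.TTheory GRing.Theory Num.Theory.
Local Open Scope classical_set_scope.
Local Open Scope ring_scope.

Definition Jmax (R : realType) (K : nat) (beta : R) : nat :=
  minn K (Num.truncn (beta^-1)).

(* probing order k_1, ..., k_K induced by a permutation s (k_{i+1} = s i) *)
Definition probe_order (K : nat) (s : {perm 'I_K}) : seq 'I_K :=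
  [seq s i | i <- enum 'I_K].

Definition order_ok (R : realType) (K : nat) (r T : 'I_K -> R) (s : {perm 'I_K}) : Prop :=
  forall i j : 'I_K, (i <= j)%N -> r (s j) / T (s j) <= r (s i) / T (s i).

(* w_j = max of the first j probed values v (values are nonnegative) *)
Definition wmax (R : realType) (K : nat) (v : 'I_K -> R) (ks : seq 'I_K) (j : nat) : R :=
  \big[Num.max/0]_(u <- take j ks) v u.

(* stopping test after j probes; h u w = E[max(w, R_u/T_u) | w_j = w] for the
   next user u = k_{j+1} *)
Definition stop_rule (R : realType) (K : nat) (beta : R) (jm : nat)
  (v : 'I_K -> R) (h : 'I_K -> R -> \bar R) (ks : seq 'I_K) (j : nat) : bool :=
  (j == jm) ||
  (if ohead (drop j ks) is Some u then
     (((1 - j%:R * beta) * wmax v ks j)%:E >=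
        (1 - j.+1%:R * beta)%:E * h u (wmax v ks j))%E
   else true).

Definition num_probes (R : realType) (K : nat) (beta : R) (jm : nat)
  (v : 'I_K -> R) (h : 'I_K -> R -> \bar R) (ks : seq 'I_K) : nat :=
  (find (stop_rule beta jm v h ks) (iota 1 jm)).+1.

Definition selected (R : realType) (K : nat) (beta : R) (jm : nat)
  (v : 'I_K -> R) (h : 'I_K -> R -> \bar R) (ks : seq 'I_K) : option 'I_K :=
  let J := num_probes beta jm v h ks in
  ohead [seq u <- take J ks | v u == wmax v ks J].

(* Rates R_k = r_k X_k; the conditional expectation
   E[max(w_j, R_{k_{j+1}}/T_{k_{j+1}}) | w_j] equals h(w_j) with
   h(w) = E[max(w, R_{k_{j+1}}/T_{k_{j+1}})], by independence of users. *)
Definition jps_select d (Om : measurableType d) (R : realType)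
  (P : probability Om R) (K : nat) (X : 'I_K -> Om -> R) (r T : 'I_K -> R)
  (beta : R) (s : {perm 'I_K}) (w : Om) : option 'I_K :=
  selected beta (Jmax K beta)
    (fun u => r u * X u w / T u)
    (fun u x => ('E_P[fun w' => (Num.max x (r u * X u w' / T u))%R])%E)
    (probe_order s).

Definition mutually_independent d (Om : measurableType d) (R : realType)
  (P : probability Om R) (K : nat) (X : 'I_K -> Om -> R)
  (sigma : Om -> {perm 'I_K}) : Prop :=
  forall (A : 'I_K -> set R) (S : set {perm 'I_K}),
    (forall i, measurable (A i)) ->
    P ((sigma @^-1` S) `&` \bigcap_(i in [set: 'I_K]) (X i @^-1` A i)) =
    (P (sigma @^-1` S) * \prod_(i < K) P (X i @^-1` A i))%E.

Definition identically_distributed d (Om : measurableType d) (R : realType)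
  (P : probability Om R) (K : nat) (X : 'I_K -> Om -> R) : Prop :=
  forall (i j : 'I_K) (A : set R), measurable A ->
    P (X i @^-1` A) = P (X j @^-1` A).

(* Main.v *)
Require Import Defs.
From HB Require Import structures.
From mathcomp Require Import all_boot all_order all_algebra all_fingroup.
From mathcomp Require Import all_classical all_reals all_analysis.
From mathcomp Require Import ring measurable_realfun.
Import Order.TTheory GRing.Theory Num.Theory.
Local Open Scope classical_set_scope.
Local Open Scope ring_scope.

Module Aux.
Set Implicit Arguments. Unset Strict Implicit. Unset Printing Implicit Defensive.


Section Comb.
Variables (R : realType) (K : nat).
Implicit Types (v : 'I_K -> R) (ks : seq 'I_K) (H : R -> \bar R).

Lemma wmax_map v v' (f : 'I_K -> 'I_K) ks j :
  (forall u, v' (f u) = v u) -> wmax v' (map f ks) j = wmax v ks j.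
Proof. by move=> e; rewrite /wmax -map_take big_map; apply: eq_bigr => u _; exact: e. Qed.

Lemma stop_rule_map (beta : R) jm v v' H f ks j :
  (forall u, v' (f u) = v u) ->
  stop_rule beta jm v' (fun _ => H) (map f ks) j =
  stop_rule beta jm v (fun _ => H) ks j.
Proof. by move=> e; rewrite /stop_rule (wmax_map _ _ e) -map_drop; case: (drop j ks). Qed.

Lemma num_probes_map (beta : R) jm v v' H f ks :
  (forall u, v' (f u) = v u) ->
  num_probes beta jm v' (fun _ => H) (map f ks) =
  num_probes beta jm v (fun _ => H) ks.
Proof.
by move=> e; rewrite /num_probes; congr (_.+1); apply: eq_find => j; exact: stop_rule_map.
Qed.

Lemma selected_map (beta : R) jm v v' H f ks :
  (forall u, v' (f u) = v u) ->
  selected beta jm v' (fun _ => H) (map f ks) =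
  omap f (selected beta jm v (fun _ => H) ks).
Proof.
move=> e; rewrite /selected (num_probes_map _ _ _ _ e) -map_take filter_map.
rewrite (wmax_map _ _ e).
rewrite (@eq_filter _ (preim f _) (fun u => v u == wmax v ks (num_probes beta jm v (fun=> H) ks))); last first.
  by move=> u /=; rewrite e.
by case: [seq _ <- _ | _].
Qed.

Lemma bigmax_attained v (l : seq 'I_K) : (forall u, 0 <= v u) -> l != [::] ->
  exists2 u, u \in l & v u = \big[Num.max/0]_(u <- l) v u.
Proof.
move=> v0; elim: l => // a l IH _; rewrite big_cons.
case: l IH => [_|b l IH].
  by exists a; rewrite ?mem_head // big_nil max_l.
have [u ul eu] := IH isT.
case: (leP (\big[Num.max/0]_(u <- b :: l) v u) (v a)) => h.
  by exists a; rewrite ?mem_head // max_l.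
exists u; first by rewrite in_cons ul orbT.
by rewrite eu.
Qed.

Lemma selected_some (beta : R) jm v h ks : (forall u, 0 <= v u) -> ks != [::] ->
  selected beta jm v h ks != None.
Proof.
move=> v0 ks0; rewrite /selected.
set J := num_probes _ _ _ _ _.
have tk : take J ks != [::].
  by rewrite /J /num_probes; case: (ks) ks0.
have [u ul eu] := bigmax_attained v0 tk.
have : has (fun u => v u == wmax v ks J) (take J ks).
  by apply/hasP; exists u => //; rewrite eu.
by rewrite has_filter; case: [seq _ <- _ | _].
Qed.

End Comb.


Section MB.
Context d0 (T0 : measurableType d0) (R : realType).

Lemma mb_or (f g : T0 -> bool) : measurable_fun setT f -> measurable_fun setT g ->
  measurable_fun setT (fun z => f z || g z).
Proof.
move=> mf mg.
have -> : (fun z => f z || g z) = (fun z => ~~ (~~ f z && ~~ g z)).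
  by apply: funext => z; case: (f z); case: (g z).
by apply: measurable_neg; apply: measurable_and; apply: measurable_neg.
Qed.

Lemma mb_has (A : Type) (l : seq A) (q : T0 -> A -> bool) :
  (forall a, measurable_fun setT (fun z => q z a)) ->
  measurable_fun setT (fun z => has (q z) l).
Proof.
move=> mq; elim: l => [|a l IH] /=; first exact: measurable_cst.
exact: mb_or.
Qed.

Lemma mb_find (A : Type) (l : seq A) (q : T0 -> A -> bool) n :
  (forall a, measurable_fun setT (fun z => q z a)) ->
  measurable_fun setT (fun z => find (q z) l == n).
Proof.
move=> mq; elim: l n => [|a l IH] n /=; first exact: measurable_cst.
have -> : (fun z => (if q z a then 0 else (find (q z) l).+1) == n) =
  (fun z => (q z a && (n == 0)) || (~~ q z a && ((0 < n)%N && (find (q z) l == n.-1)))).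
  by apply: funext => z; case: (q z a); case: n.
apply: mb_or; apply: measurable_and => //; try exact: measurable_cst.
- exact: measurable_neg.
- by apply: measurable_and => //; exact: measurable_cst.
Qed.

Lemma mb_ohead (A : eqType) (l : seq A) (q : T0 -> A -> bool) k :
  (forall a, measurable_fun setT (fun z => q z a)) ->
  measurable_fun setT (fun z => ohead [seq u <- l | q z u] == Some k).
Proof.
move=> mq; elim: l => [|a l IH] /=; first exact: measurable_cst.
have -> : (fun z => ohead (if q z a then a :: [seq u <- l | q z u] else [seq u <- l | q z u]) == Some k) =
  (fun z => (q z a && (a == k)) || (~~ q z a && (ohead [seq u <- l | q z u] == Some k))).
  by apply: funext => z; case: (q z a) => /=; rewrite ?orbF.
apply: mb_or; apply: measurable_and; [exact: mq|exact: measurable_cst| |exact: IH].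
exact: measurable_neg (mq a).
Qed.

Lemma mb_bigmax (I : Type) (l : seq I) (f : T0 -> I -> R) :
  (forall u, measurable_fun setT (fun z => f z u)) ->
  measurable_fun setT (fun z => \big[Num.max/0]_(u <- l) f z u).
Proof.
move=> mf; elim: l => [|a l IH].
  have -> : (fun z => \big[Num.max/0]_(u <- [::]) f z u) = (fun _ => 0).
    by apply: funext => z; rewrite big_nil.
  exact: measurable_cst.
have -> : (fun z => \big[Num.max/0]_(u <- a :: l) f z u) =
  (fun z => f z a) \max (fun z => \big[Num.max/0]_(u <- l) f z u).
  by apply: funext => z; rewrite big_cons.
exact: measurable_realfun.measurable_maxr.
Qed.

End MB.

Definition permT (K : nat) := {perm 'I_K}.
HB.instance Definition _ K := Choice.on (permT K).
HB.instance Definition _ K := isPointed.Build (permT K) 1%g.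
Definition Tc (R : realType) K := (permT K * ('I_K -> R))%type.
HB.instance Definition _ (R : realType) K := Choice.on (Tc R K).
HB.instance Definition _ (R : realType) K := isPointed.Build (Tc R K) (1%g, fun _ => 0).

Definition rect (R : realType) K (S : set (permT K)) (A : 'I_K -> set R) : set (Tc R K) :=
  [set z | S z.1 /\ forall i, A i (z.2 i)].

Definition Gen (R : realType) K : set (set (Tc R K)) :=
  [set E | E = set0 \/ exists S A, (S = setT \/ exists s, S = [set s]) /\
     (forall i, measurable (A i)) /\ E = rect S A].
Arguments Gen : clear implicits.

Definition TT (R : realType) K := g_sigma_algebraType (Gen R K).

Section GenP.
Variables (R : realType) (K : nat).

Lemma Gen_setI : setI_closed (Gen R K).
Proof.
move=> E1 E2 [->|[S1 [A1 [hS1 [mA1 ->]]]]]; first by left; rewrite set0I.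
case=> [->|[S2 [A2 [hS2 [mA2 ->]]]]]; first by left; rewrite setI0.
have -> : rect S1 A1 `&` rect S2 A2 = rect (S1 `&` S2) (fun i => A1 i `&` A2 i).
  apply/seteqP; split => z /=.
    by move=> [[h1 h2] [h3 h4]]; split => // i; split.
  by move=> [[h1 h2] h]; split; split => // i; case: (h i).
have mA : forall i, measurable (A1 i `&` A2 i) by move=> i; exact: measurableI.
case: hS1 => [->|[s1 ->]]; case: hS2 => [->|[s2 ->]].
- by right; exists setT, (fun i => A1 i `&` A2 i); rewrite setIT; split => //; left.
- by right; exists [set s2], (fun i => A1 i `&` A2 i); rewrite setTI; split => //; right; exists s2.
- by right; exists [set s1], (fun i => A1 i `&` A2 i); rewrite setIT; split => //; right; exists s1.
- have [<-|ne] := eqVneq s1 s2.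
    by right; exists [set s1], (fun i => A1 i `&` A2 i); rewrite setIid; split => //; right; exists s1.
  left; apply/seteqP; split => z //= [[h1 h2] _].
  by move/eqP: ne; rewrite -h1 -h2.
Qed.

Lemma Gen_setT : Gen R K setT.
Proof.
right; exists setT, (fun _ => setT); split; first by left.
split => //; apply/seteqP; split => z //= _.
Qed.

End GenP.

Section Main.
Variables (R : realType) (d : measure_display) (Om : measurableType d)
  (P : probability Om R) (K : nat) (X : 'I_K -> Om -> R)
  (sigma : Om -> {perm 'I_K}) (r : 'I_K -> R) (beta kappa : R) (k0 : 'I_K).
Hypotheses (mX : forall k, measurable_fun setT (X k))
  (X0 : forall k w, 0 <= X k w)
  (EX : forall k, 'E_P[X k]%E = 1%:E)
  (idX : identically_distributed P X)
  (msig : forall s, measurable (sigma @^-1` [set s]))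
  (indep : mutually_independent P X sigma)
  (r0 : forall k, 0 < r k) (kappa0 : 0 < kappa)
  (unif : forall s, P (sigma @^-1` [set s]) =
     if `[< order_ok r (fun k => kappa * r k) s >] then
       ((#|[set s' : {perm 'I_K} | `[< order_ok r (fun k => kappa * r k) s' >]]|)%:R^-1)%:E
     else 0%E).

Local Notation T := (TT R K).

Lemma order_ok_all s : order_ok r (fun k => kappa * r k) s.
Proof.
have e u : r u / (kappa * r u) = kappa^-1.
  by field; apply/andP; split; apply: lt0r_neq0.
by move=> i j _; rewrite !e.
Qed.

Lemma Psig_eq s s' : P (sigma @^-1` [set s]) = P (sigma @^-1` [set s']).
Proof. by rewrite !unif !asboolT //; exact: order_ok_all. Qed.

Lemma mcoord u : measurable_fun setT (fun z : T => z.2 u).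
Proof.
move=> _ A mA; rewrite setTI; apply: sub_sigma_algebra; right.
exists setT, (fun i => if i == u then A else setT); split; first by left.
split; first by move=> i; case: ifP.
apply/seteqP; split=> z /=.
  by move=> h; split => // i; case: eqP => [->|].
by move=> [_ h]; have := h u; rewrite eqxx.
Qed.

Lemma msel1 s : measurable_fun setT (fun z : T => z.1 == s).
Proof.
apply: (measurable_fun_bool true); rewrite setTI; apply: sub_sigma_algebra; right.
exists [set s], (fun _ => setT); split; first by right; exists s.
split => //; apply/seteqP; split => z; rewrite /rect /=; first by move/eqP => ->.
by move=> [h _]; apply/eqP.
Qed.

Lemma mv u : measurable_fun setT (fun z : T => z.2 u / kappa).
Proof.
have -> : (fun z : T => z.2 u / kappa) = (fun z : T => z.2 u) \* cst (kappa^-1) by [].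
by apply: measurable_realfun.measurable_funM; [exact: mcoord|exact: measurable_cst].
Qed.

Definition Hh (y : R) : \bar R := ('E_P[fun w => (Num.max y (X k0 w / kappa))%R])%E.

Definition XRV v : {RV P >-> R} := HB.pack (X v) (isMeasurableFun.Build _ _ _ _ (X v) (mX v)).

Lemma Hh_id u y : ('E_P[fun w => (Num.max y (X u w / kappa))%R])%E = Hh y.
Proof.
rewrite /Hh !unlock.
have mf : measurable_fun setT (fun t : R => (Num.max y (Num.max t 0 / kappa))%:E).
  apply/measurable_realfun.measurable_EFinP.
  apply: measurable_realfun.measurable_maxr; first exact: measurable_cst.
  have -> : (fun t : R => Num.max t 0 / kappa) = (id \max cst 0) \* cst (kappa^-1) by [].
  apply: measurable_realfun.measurable_funM; last exact: measurable_cst.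
  by apply: measurable_realfun.measurable_maxr; [exact: measurable_id|exact: measurable_cst].
have f0 (t : R) : (0 <= (Num.max y (Num.max t 0 / kappa))%:E)%E.
  rewrite lee_fin le_max; apply/orP; right; apply: divr_ge0; last exact: ltW.
  by rewrite le_max lexx orbT.
have key v : (\int[P]_w (Num.max y (X v w / kappa))%:E = \int[distribution P (XRV v)]_t (Num.max y (Num.max t 0 / kappa))%:E)%E.
  rewrite ge0_integral_distribution //; apply: eq_integral => w _ /=.
  by rewrite [Num.max (X v w) 0]max_l.
rewrite !key; apply: eq_measure_integral => A mA _ /=.
by rewrite /distribution /pushforward; exact: idX.
Qed.

Lemma Hh_fin y : Hh y \is a fin_num.
Proof.
rewrite /Hh unlock ge0_fin_numE; last first.
  apply: integral_ge0 => w _; rewrite lee_fin le_max; apply/orP; right.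
  by apply: divr_ge0 => //; exact: ltW.
have mXE : measurable_fun setT (fun w => (X k0 w)%:E).
  by apply/measurable_realfun.measurable_EFinP; exact: mX.
apply: (@le_lt_trans _ _ (\int[P]_w ((`|y|)%:E + (kappa^-1)%:E * (X k0 w)%:E))%E).
  apply: ge0_le_integral => //.
  - move=> w _; rewrite lee_fin le_max; apply/orP; right.
    by apply: divr_ge0 => //; exact: ltW.
  - apply/measurable_realfun.measurable_EFinP.
    apply: measurable_realfun.measurable_maxr; first exact: measurable_cst.
    have -> : (fun w => X k0 w / kappa) = X k0 \* cst (kappa^-1) by [].
    by apply: measurable_realfun.measurable_funM; [exact: mX|exact: measurable_cst].
  - apply: emeasurable_funD; first exact: measurable_cst.
    by apply: emeasurable_funM => //; exact: measurable_cst.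
  - move=> w _; rewrite -EFinM -EFinD lee_fin ge_max; apply/andP; split.
      apply: le_trans (ler_norm y) _; rewrite lerDl; apply: mulr_ge0 => //.
      by rewrite invr_ge0 ltW.
    by rewrite mulrC lerDr normr_ge0.
rewrite ge0_integralD //; last 2 first.
- move=> w _; apply: mule_ge0; rewrite lee_fin; [by rewrite invr_ge0 ltW|exact: X0].
- by apply: emeasurable_funM => //; exact: measurable_cst.
rewrite integral_cst // [X in (_ * X)%E](_ : _ = 1%E); last by apply: probability_setT.
rewrite mule1 ge0_integralZl //; last 2 first.
- by move=> w _; rewrite lee_fin.
- by rewrite lee_fin invr_ge0 ltW.
have := EX k0; rewrite unlock => ->.
by rewrite mule1 -EFinD ltry.
Qed.

Definition Hf y := fine (Hh y).

Lemma HhE y : Hh y = (Hf y)%:E.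
Proof. by rewrite /Hf fineK // Hh_fin. Qed.

Lemma Hf_nd : {homo Hf : x y / x <= y}.
Proof.
move=> x y xy; rewrite /Hf fine_le ?Hh_fin //.
rewrite /Hh unlock; apply: ge0_le_integral => //.
- move=> w _; rewrite lee_fin le_max; apply/orP; right.
  by apply: divr_ge0 => //; exact: ltW.
- apply/measurable_realfun.measurable_EFinP.
  apply: measurable_realfun.measurable_maxr; first exact: measurable_cst.
  have -> : (fun w => X k0 w / kappa) = X k0 \* cst (kappa^-1) by [].
  by apply: measurable_realfun.measurable_funM; [exact: mX|exact: measurable_cst].
- apply/measurable_realfun.measurable_EFinP.
  apply: measurable_realfun.measurable_maxr; first exact: measurable_cst.
  have -> : (fun w => X k0 w / kappa) = X k0 \* cst (kappa^-1) by [].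
  by apply: measurable_realfun.measurable_funM; [exact: mX|exact: measurable_cst].
- move=> w _; rewrite lee_fin ge_max !le_max lexx orbT andbT.
  by rewrite xy.
Qed.

Lemma mHf : measurable_fun setT Hf.
Proof. exact: measurable_realfun.nondecreasing_measurable Hf_nd. Qed.

Definition Fsel (z : Tc R K) : option 'I_K :=
  selected beta (Jmax K beta) (fun u => z.2 u / kappa) (fun _ => Hh)
    (probe_order (z.1 : {perm 'I_K})).

Definition Z (w : Om) : T := ((sigma w : permT K), fun i => X i w).

Lemma jps_Z w : jps_select P X r (fun k => kappa * r k) beta (sigma w) w = Fsel (Z w).
Proof.
rewrite /jps_select /Fsel /=; congr selected.
- apply: funext => u; field; apply/andP; split; exact: lt0r_neq0.
- apply: funext => u; apply: funext => y; rewrite -(Hh_id u y); congr expectation.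
  apply: funext => w0; congr (Num.max _ _).
  field; apply/andP; split; exact: lt0r_neq0.
Qed.

Definition Phi (p : {perm 'I_K}) (z : Tc R K) : Tc R K :=
  (((z.1 : {perm 'I_K}) * p^-1)%g : permT K, fun i => z.2 (p i)).

Lemma Fsel_Phi p z : Fsel (Phi p z) = omap (p^-1)%g (Fsel z).
Proof.
rewrite /Fsel /=.
have -> : probe_order ((z.1 : {perm 'I_K}) * p^-1)%g = map (p^-1)%g (probe_order z.1).
  by rewrite /probe_order; elim: (enum 'I_K) => //= i l ->; rewrite permM.
by apply: selected_map => u /=; rewrite permKV.
Qed.

Definition C k : set T := [set z | Fsel z = Some k].

Lemma C_Phi p k : (Phi p) @^-1` (C k) = C (p k).
Proof.
apply/seteqP; split => z; rewrite /C /= Fsel_Phi; case: (Fsel z) => //= j.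
- by move=> [<-]; rewrite permKV.
- by move=> [->]; rewrite permK.
Qed.

Lemma msel_gen jm (ks : seq 'I_K) k : measurable_fun setT
  (fun z : T => selected beta jm (fun u => z.2 u / kappa) (fun _ => Hh) ks == Some k).
Proof.
have mw j : measurable_fun setT (fun z : T => wmax (fun u => z.2 u / kappa) ks j).
  by rewrite /wmax; apply: mb_bigmax => u; exact: mv.
have mstop j : measurable_fun setT
    (fun z : T => stop_rule beta jm (fun u => z.2 u / kappa) (fun _ => Hh) ks j).
  rewrite /stop_rule; case: (ohead (drop j ks)) => [u|]; last exact: measurable_cst.
  apply: mb_or; first exact: measurable_cst.
  have -> : (fun z : T => (((1 - j%:R * beta) * wmax (fun u => (z.2 u / kappa)%R) ks j)%:E >=
        (1 - j.+1%:R * beta)%:E * Hh (wmax (fun u => (z.2 u / kappa)%R) ks j))%E) =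
      (fun z : T => (1 - j.+1%:R * beta) * Hf (wmax (fun u => z.2 u / kappa) ks j) <=
        (1 - j%:R * beta) * wmax (fun u => z.2 u / kappa) ks j).
    by apply: funext => z; rewrite HhE -EFinM lee_fin.
  apply: measurable_fun_ler.
    have -> : (fun z : T => (1 - j.+1%:R * beta) * Hf (wmax (fun u => z.2 u / kappa) ks j)) =
      cst (1 - j.+1%:R * beta) \* (Hf \o (fun z : T => wmax (fun u => z.2 u / kappa) ks j)) by [].
    apply: measurable_funM; first exact: measurable_cst.
    by apply: measurableT_comp; [exact: mHf|exact: mw].
  have -> : (fun z : T => (1 - j%:R * beta) * wmax (fun u => z.2 u / kappa) ks j) =
    cst (1 - j%:R * beta) \* (fun z : T => wmax (fun u => z.2 u / kappa) ks j) by [].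
  by apply: measurable_funM; [exact: measurable_cst|exact: mw].
have mnp n : measurable_fun setT
    (fun z : T => num_probes beta jm (fun u => z.2 u / kappa) (fun _ => Hh) ks == n).
  rewrite /num_probes; case: n => [|n]; first exact: measurable_cst.
  have -> : (fun z : T => (find (stop_rule beta jm (fun u => z.2 u / kappa) (fun _ => Hh) ks)
      (iota 1 jm)).+1 == n.+1) =
    (fun z : T => find (stop_rule beta jm (fun u => z.2 u / kappa) (fun _ => Hh) ks)
      (iota 1 jm) == n) by [].
  by apply: mb_find => j; exact: mstop.
have -> : (fun z : T => selected beta jm (fun u => z.2 u / kappa) (fun _ => Hh) ks == Some k) =
  (fun z : T => has (fun n => (num_probes beta jm (fun u => z.2 u / kappa) (fun _ => Hh) ks == n) &&
     (ohead [seq u <- take n ks | z.2 u / kappa == wmax (fun u => z.2 u / kappa) ks n] == Some k))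
     (iota 1 jm.+1)).
  apply: funext => z; rewrite /selected.
  set J := num_probes _ _ _ _ _.
  apply/idP/hasP => [h|[n _ /andP [/eqP <- //]]].
  exists J; last by rewrite eqxx.
  rewrite mem_iota /J /num_probes ltnS /= ltnS.
  by have := find_size (stop_rule beta jm (fun u => z.2 u / kappa) (fun=> Hh) ks) (iota 1 jm); rewrite size_iota.
apply: mb_has => n; apply: measurable_and; first exact: mnp.
apply: mb_ohead => u.
by apply: measurable_fun_eqr; [exact: mv|exact: mw].
Qed.

Lemma mC k : measurable (C k).
Proof.
have -> : C k = [set z : T | has (fun s => (z.1 == s) &&
     (selected beta (Jmax K beta) (fun u => z.2 u / kappa) (fun _ => Hh) (probe_order s) == Some k))
     (enum {perm 'I_K})].
  apply/seteqP; split => z; rewrite /C /=.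
    move=> h; apply/hasP; exists (z.1 : {perm 'I_K}); first by rewrite mem_enum.
    by rewrite eqxx -/(Fsel z) h /=.
  by move=> /hasP [s _ /andP [/eqP e /eqP]]; rewrite /Fsel e.
have mb : measurable_fun setT (fun z : T => has (fun s => (z.1 == s) &&
     (selected beta (Jmax K beta) (fun u => z.2 u / kappa) (fun _ => Hh) (probe_order s) == Some k))
     (enum {perm 'I_K})).
  apply: mb_has => s; apply: measurable_and; first exact: msel1.
  exact: msel_gen.
have := mb measurableT [set true] I; rewrite setTI.
by [].
Qed.

Lemma preimZ (s' : Om -> {perm 'I_K}) (Y : 'I_K -> Om -> R) (S : set (permT K)) A :
  (fun w => ((s' w : permT K), fun i => Y i w) : T) @^-1` rect S A =
  s' @^-1` S `&` \bigcap_(i in [set: 'I_K]) (Y i @^-1` A i).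
Proof.
apply/seteqP; split => w; rewrite /rect /=.
  by move=> [h1 h2]; split => // i _; exact: h2.
by move=> [h1 h2]; split => // i; exact: h2.
Qed.

Lemma mZgen (s' : Om -> {perm 'I_K}) (Y : 'I_K -> Om -> R) :
  (forall s, measurable (s' @^-1` [set s])) -> (forall i, measurable_fun setT (Y i)) ->
  measurable_fun setT (fun w => ((s' w : permT K), fun i => Y i w) : T).
Proof.
move=> ms mY; apply: (@measurability _ _ Om T setT _ (Gen R K)); first reflexivity.
move=> _ [E GE <-]; rewrite setTI.
case: GE => [->|[S [A [hS [mA ->]]]]]; first by rewrite preimage_set0; exact: measurable0.
rewrite preimZ; apply: measurableI.
  by case: hS => [->|[s ->]]; [rewrite preimage_setT; exact: measurableT|exact: ms].
apply: fin_bigcap_measurable; first exact: finite_finset.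
by move=> i _; rewrite -(setTI (_ @^-1` _)); exact: mY.
Qed.

Lemma mZ : measurable_fun setT Z.
Proof. exact: mZgen. Qed.

Lemma fiber_mul p s : (fun w => (sigma w * p^-1)%g) @^-1` [set s] = sigma @^-1` [set (s * p)%g].
Proof. by apply/seteqP; split => w /= h; [rewrite -h mulgKV|rewrite h mulgK]. Qed.

Lemma mZ2 p : measurable_fun setT (fun w => (Phi p (Z w) : T)).
Proof.
apply: (@mZgen (fun w => (sigma w * p^-1)%g) (fun i => X (p i))) => [s|i].
  by rewrite fiber_mul; exact: msig.
exact: mX.
Qed.

Definition ZRV : {RV P >-> T} := HB.pack Z (isMeasurableFun.Build _ _ _ _ Z mZ).
Definition Z2RV p : {RV P >-> T} :=
  HB.pack (fun w => (Phi p (Z w) : T)) (isMeasurableFun.Build _ _ _ _ _ (mZ2 p)).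

Lemma law_eq p A : measurable A -> P (Z @^-1` A) = P ((fun w => (Phi p (Z w) : T)) @^-1` A).
Proof.
move=> mA.
have eqG : forall E, Gen R K E -> distribution P ZRV E = distribution P (Z2RV p) E.
  move=> E [->|[S [B [hS [mB ->]]]]]; first by rewrite !measure0.
  rewrite /distribution /pushforward.
  have -> : ZRV @^-1` rect S B = sigma @^-1` S `&` \bigcap_(i in [set: 'I_K]) (X i @^-1` B i).
    exact: preimZ.
  have -> : Z2RV p @^-1` rect S B = (fun w => (sigma w * p^-1)%g) @^-1` S `&`
      \bigcap_(i in [set: 'I_K]) (X (p i) @^-1` B i).
    exact: (@preimZ (fun w => (sigma w * p^-1)%g) (fun i => X (p i))).
  have -> : \bigcap_(i in [set: 'I_K]) (X (p i) @^-1` B i) =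
      \bigcap_(j in [set: 'I_K]) (X j @^-1` B (p^-1 j)%g).
    apply/seteqP; split => w /= h j _.
      by have := h (p^-1 j)%g I; rewrite permKV.
    by have := h (p j) I; rewrite permK.
  have [S' [eS' PS']] : exists S' : set {perm 'I_K},
      (fun w => (sigma w * p^-1)%g) @^-1` S = sigma @^-1` S' /\
      P (sigma @^-1` S') = P (sigma @^-1` S).
    case: hS => [->|[s ->]]; first by exists setT.
    by exists [set (s * p)%g]; split; [exact: fiber_mul|exact: Psig_eq].
  rewrite eS' !indep //; try by move=> i; exact: mB.
  rewrite PS'; congr (_ * _)%E.
  rewrite [RHS](reindex_inj (@perm_inj _ p)) /=; apply: eq_bigr => i _.
  by rewrite permK; apply: idX.
have fin : forall k : nat, (distribution P ZRV ((fun _ => setT) k) < +oo)%E.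
  by move=> _; apply: (@le_lt_trans _ _ 1%E); [apply: probability_le1|exact: ltry].
have cov : \bigcup_(k : nat) (fun _ : nat => @setT T) k = setT.
  by apply/seteqP; split => // z _; exists 0%N.
have := @measure_unique _ R T (Gen R K) (fun _ => setT) erefl (@Gen_setI R K)
  (fun _ => Gen_setT R K) cov (distribution P ZRV) (distribution P (Z2RV p)) eqG fin A mA.
by [].
Qed.

Lemma PE (p : {perm 'I_K}) k : P (Z @^-1` C (p k)) = P (Z @^-1` C k).
Proof.
rewrite -(C_Phi p k).
have -> : Z @^-1` (Phi p @^-1` C k) = (fun w => (Phi p (Z w) : T)) @^-1` C k by [].
by rewrite -law_eq //; exact: mC.
Qed.

Lemma Ek k : [set w | jps_select P X r (fun k => kappa * r k) beta (sigma w) w = Some k] =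
  Z @^-1` C k.
Proof. by apply/seteqP; split => w /=; rewrite jps_Z. Qed.

Lemma main k :
  P [set w | jps_select P X r (fun k => kappa * r k) beta (sigma w) w = Some k] =
  ((K%:R)^-1)%:E.
Proof.
have K0 : (0 < K)%N by apply: leq_ltn_trans (ltn_ord k).
have allE i : P (Z @^-1` C i) = P (Z @^-1` C k).
  by rewrite -(PE (tperm k i) k) tpermL.
have mE i : measurable (Z @^-1` C i).
  by rewrite -(setTI (_ @^-1` _)); apply: mZ => //; exact: mC.
have cov : [set: Om] = \big[setU/set0]_(i < K) (Z @^-1` C i).
  apply/seteqP; split => // w _.
  have : Fsel (Z w) != None.
    apply: selected_some.
      by move=> u /=; apply: divr_ge0 => //; exact: ltW.
    by rewrite -size_eq0 size_map size_enum_ord -lt0n.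
  case e : (Fsel (Z w)) => [i|] // _.
  by rewrite (bigD1 i) //=; left; exact: e.
have tr : trivIset setT (fun i => Z @^-1` C i).
  move=> i j _ _ [w [/= hi hj]].
  by move: hi; rewrite /C /= in hj *; rewrite hj => -[].
have h1 := probability_setT P.
rewrite cov measure_bigsetU_ord // in h1.
rewrite (eq_bigr (fun _ => P (Z @^-1` C k))) in h1; last by move=> i _; exact: allE.
rewrite sumr_const card_ord in h1.
rewrite Ek -(fineK (fin_num_measure P _ (mE k))).
rewrite -(fineK (fin_num_measure P _ (mE k))) in h1.
set x := fine _ in h1 *.
have h2 : (x *+ K)%:E = 1%E by rewrite EFin_natmul; exact: h1.
move: h2 => [h2].
congr EFin.
have nK : (K%:R : R) != 0 by rewrite pnatr_eq0 -lt0n.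
by apply: (mulIf nK); rewrite /= mulVf // mulr_natr.
Qed.

End Main.

End Aux.

Theorem corollary1 (R : realType) (d : measure_display) (Om : measurableType d)
  (P : probability Om R) (K : nat) (X : 'I_K -> Om -> R)
  (sigma : Om -> {perm 'I_K}) (r : 'I_K -> R) (beta kappa : R) :
  (* (A1) *)
  (forall k, measurable_fun setT (X k)) ->
  (forall k w, 0 <= X k w) ->
  (forall k, 'E_P[X k]%E = 1%:E) ->
  identically_distributed P X ->
  (forall s, measurable (sigma @^-1` [set s])) ->
  mutually_independent P X sigma ->
  (forall k, 0 < r k) ->
  0 < beta <= 1 ->
  (* steady state T(n-1) = T^* with T^*_k = kappa r_k *)
  0 < kappa ->
  (* the probing order is uniform among the orderings by decreasing r_k/T_k *)
  (forall s, P (sigma @^-1` [set s]) =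
     if `[< order_ok r (fun k => kappa * r k) s >] then
       ((#|[set s' : {perm 'I_K} | `[< order_ok r (fun k => kappa * r k) s' >]]|)%:R^-1)%:E
     else 0%E) ->
  forall k : 'I_K,
    P [set w | jps_select P X r (fun k => kappa * r k) beta (sigma w) w = Some k]
    = ((K%:R)^-1)%:E.
Proof.
move=> mX X0 EX idX msig indep r0 _ kappa0 unif k.
exact: (Aux.main beta k mX X0 EX idX msig indep r0 kappa0 unif k).
Qed.
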